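(* Let $A$ be a vector space with bilinear operations $\cdot,\circ$, and $[x,y]=x\circ y-y\circ x$. (1) If $(A,\cdot,[-,-])$ is a transposed Poisson algebra, $(A,\circ)$ is pre-Lie, and $(-\mathcal{L}^*_{\cdot},\mathcal{L}^*_{\circ},A^* )$ is a representation of the transposed Poisson algebra $(A,\cdot,[-,-])$, then $(A,\cdot,\circ)$ is a TCPD algebra. (2) Conversely, if $(A,\cdot,\circ)$ is a TCPD algebra, then $(A,\cdot,[-,-])$ is a transposed Poisson algebra with representation $(-\mathcal{L}^*_{\cdot},\mathcal{L}^*_{\circ},A^* )$.
   Context: Finite-dimensional spaces, characteristic zero. $\mathcal{L}_\ast(x)y=x\ast y$; for linear $\rho:A\to\mathrm{End}(V)$, $\langle\rho^*(x)v^*,u\rangle=-\langle v^*,\rho(x)u\rangle$. Pre-Lie: $(x\circ y)\circ z-x\circ(y\circ z)=(y\circ x)\circ z-y\circ(x\circ z)$. Transposed Poisson algebra: $(A,\cdot)$ commutative associative, $(A,[-,-])$ Lie, $2z\cdot[x,y]=[z\cdot x,y]+[x,z\cdot y]$. A representation of a transposed Poisson algebra is $(\mu,\rho,V)$ with $\mu(x\cdot y)=\mu(x)\mu(y)$, $\rho([x,y])=[\rho(x),\rho(y)]$, $2\mu(x)\rho(y)=\rho(x\cdot y)+\rho(y)\mu(x)$, $2\mu([x,y])=\rho(x)\mu(y)-\rho(y)\mu(x)$. A TCPD algebra is $(A,\cdot,\circ)$ with $(A,\cdot)$ commutative associative, $(A,\circ)$ pre-Lie, and for all $x,y,z$: $2x\circ(y\cdot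 z)=(z\cdot x)\circ y+z\cdot(x\circ y)$; $2(x\circ y)\cdot z-2(y\circ x)\cdot z=x\cdot(y\circ z)-y\cdot(x\circ z)$; $3y\circ(z\cdot x)-3x\circ(z\cdot y)-(z\cdot x)\circ y+(z\cdot y)\circ x=0$. *)

(* Defs.v *)
From HB Require Import structures.
From mathcomp Require Import all_boot all_order all_algebra.
Set Implicit Arguments. Unset Strict Implicit. Unset Printing Implicit Defensive.
Import GRing.Theory.
Local Open Scope ring_scope.

(* Finite-dimensional vector spaces over a field K: A : vectType K.
   The dual space A^* is 'Hom(A, K^o) (linear functionals), with pairing
   <f, u> = f u. *)

Section Defs.
Variable K : fieldType.
Variable A : vectType K.

Definition bilinear_op (op : A -> A -> A) : Prop :=
  (forall x, linear (op x)) /\ (forall y, linear (fun x => op x y)).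

Definition comm_assoc (dot : A -> A -> A) : Prop :=
  (forall x y, dot x y = dot y x) /\
  (forall x y z, dot (dot x y) z = dot x (dot y z)).

Definition is_Lie (br : A -> A -> A) : Prop :=
  (forall x, br x x = 0) /\
  (forall x y z, br x (br y z) + br y (br z x) + br z (br x y) = 0).

Definition is_preLie (circ : A -> A -> A) : Prop :=
  forall x y z, circ (circ x y) z - circ x (circ y z)
              = circ (circ y x) z - circ y (circ x z).

Definition is_TPA (dot br : A -> A -> A) : Prop :=
  comm_assoc dot /\ is_Lie br /\
  (forall x y z, 2%:R *: dot z (br x y) = br (dot z x) y + br x (dot z y)).

Definition is_TPA_rep (V : vectType K) (dot br : A -> A -> A)
  (mu rho : A -> 'End(V)) : Prop :=
  linear mu /\ linear rho /\
  (forall x y, mu (dot x y) = (mu x \o mu y)%VF) /\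
  (forall x y, rho (br x y) = (rho x \o rho y)%VF - (rho y \o rho x)%VF) /\
  (forall x y, 2%:R *: (mu x \o rho y)%VF = rho (dot x y) + (rho y \o mu x)%VF) /\
  (forall x y, 2%:R *: mu (br x y) = (rho x \o mu y)%VF - (rho y \o mu x)%VF).

Definition Lop (op : A -> A -> A) (x : A) : 'End(A) := linfun (op x).

Definition dual_op (rho : A -> 'End(A)) (x : A) : 'End('Hom(A, K^o)) :=
  linfun (fun f : 'Hom(A, K^o) => - (f \o rho x)%VF).

Definition is_TCPD (dot circ : A -> A -> A) : Prop :=
  comm_assoc dot /\ is_preLie circ /\
  (forall x y z, 2%:R *: circ x (dot y z) = circ (dot z x) y + dot z (circ x y)) /\
  (forall x y z, 2%:R *: dot (circ x y) z - 2%:R *: dot (circ y x) z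
                 = dot x (circ y z) - dot y (circ x z)) /\
  (forall x y z, 3%:R *: circ y (dot z x) - 3%:R *: circ x (dot z y)
                 - circ (dot z x) y + circ (dot z y) x = 0).

End Defs.

(* Main.v *)
Require Import Defs.
From HB Require Import structures.
From mathcomp Require Import all_boot all_order all_algebra ring.
Import GRing.Theory.
Local Open Scope ring_scope.

Section Lin.
Variables (K : fieldType) (aT rT : vectType K).
Definition lin_wrap (f : aT -> rT) (Hf : linear f) : aT -> rT := f.
HB.instance Definition _ f Hf := GRing.isLinear.Build K aT rT _ (@lin_wrap f Hf) Hf.
Lemma linfunE' (f : aT -> rT) : linear f -> forall u, linfun f u = f u.
Proof. move=> Hf u. exact: (lfunE (@lin_wrap f Hf) u). Qed.
Lemma linD' (f : aT -> rT) : linear f -> forall u v, f (u + v) = f u + f v.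
Proof. move=> Hf; exact: (raddfD (@lin_wrap f Hf)). Qed.
Lemma linB' (f : aT -> rT) : linear f -> forall u v, f (u - v) = f u - f v.
Proof. move=> Hf; exact: (raddfB (@lin_wrap f Hf)). Qed.
Lemma linN' (f : aT -> rT) : linear f -> forall u, f (- u) = - f u.
Proof. move=> Hf; exact: (raddfN (@lin_wrap f Hf)). Qed.
Lemma linMn' (f : aT -> rT) : linear f -> forall u n, f (u *+ n) = f u *+ n.
Proof. move=> Hf u n; exact: (@raddfMn _ _ (@lin_wrap f Hf) n u). Qed.
Lemma linZ' (f : aT -> rT) : linear f -> forall a u, f (a *: u) = a *: f u.
Proof. move=> Hf a u; exact: (linearZ_LR (@lin_wrap f Hf) a u). Qed.
End Lin.

Section Sep.
Variables (K : fieldType) (A : vectType K).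
Lemma sep (v w : A) : (forall f : 'Hom(A, K^o), f v = f w) -> v = w.
Proof.
move=> H; apply/eqP; rewrite -subr_eq0; apply/eqP.
have : forall f : 'Hom(A, K^o), f (v - w) = 0.
  by move=> f; rewrite raddfB /=; apply/eqP; rewrite subr_eq0; apply/eqP; exact: H.
move: (v - w) => z Hz.
rewrite (coord_vbasis (memvf z)); apply: big1 => i _.
have := Hz (@linfun _ A K^o (coord (vbasis fullv) i)); rewrite lfunE /= => ->.
by rewrite scale0r.
Qed.

Lemma dualE (rho : A -> 'End(A)) x (f : 'Hom(A, K^o)) u :
  dual_op rho x f u = - f (rho x u).
Proof.
rewrite /dual_op linfunE'; last first.
  by move=> a g h /=; rewrite comp_lfunDl -comp_lfunZl opprD scalerN.
rewrite (@opp_lfunE _ _ _ (f \o rho x)%VF u) comp_lfunE //.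
Qed.

Lemma LopE (op : A -> A -> A) x u : linear (op x) -> Lop op x u = op x u.
Proof. by move=> H; rewrite /Lop linfunE'. Qed.
End Sep.

Lemma via1 (R : comRingType) (l r g1 g2 k : R) :
  l = r -> g1 - g2 = k * (l - r) -> g1 = g2.
Proof. by move=> -> /eqP; rewrite subrr mulr0 subr_eq0 => /eqP. Qed.
Lemma via2 (R : comRingType) (l r l' r' g1 g2 k k' : R) :
  l = r -> l' = r' -> g1 - g2 = k * (l - r) + k' * (l' - r') -> g1 = g2.
Proof. by move=> -> -> /eqP; rewrite !subrr !mulr0 addr0 subr_eq0 => /eqP. Qed.
Lemma via3 (R : comRingType) (l r l' r' l'' r'' g1 g2 k k' k'' : R) :
  l = r -> l' = r' -> l'' = r'' ->
  g1 - g2 = k * (l - r) + k' * (l' - r') + k'' * (l'' - r'') -> g1 = g2.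
Proof. by move=> -> -> -> /eqP; rewrite !subrr !mulr0 !addr0 subr_eq0 => /eqP. Qed.
Arguments via1 {R l r g1 g2} k _ _.
Arguments via2 {R l r l' r' g1 g2} k k' _ _ _.
Arguments via3 {R l r l' r' l'' r'' g1 g2} k k' k'' _ _ _ _.
Lemma via4 (R : comRingType) (l1 r1 l2 r2 l3 r3 l4 r4 g1 g2 k1 k2 k3 k4 : R) :
  l1 = r1 -> l2 = r2 -> l3 = r3 -> l4 = r4 ->
  g1 - g2 = k1 * (l1 - r1) + k2 * (l2 - r2) + k3 * (l3 - r3) + k4 * (l4 - r4) -> g1 = g2.
Proof. by move=> -> -> -> -> /eqP; rewrite !subrr !mulr0 !addr0 subr_eq0 => /eqP. Qed.
Arguments via4 {R l1 r1 l2 r2 l3 r3 l4 r4 g1 g2} k1 k2 k3 k4 _ _ _ _ _.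

Section Main.
Variables (K : fieldType) (A : vectType K) (dot circ : A -> A -> A).
Hypotheses (hd : bilinear_op dot) (hc : bilinear_op circ).
Notation H := ('Hom(A, K^o)).

Lemma muE x (f : H) u : ((- dual_op (Lop dot) x) f) u = f (dot x u).
Proof.
rewrite opp_lfunE (@opp_lfunE _ _ _ (dual_op _ x f) u) dualE LopE ?opprK //.
exact: hd.1.
Qed.

Lemma rhoE x (f : H) u : (dual_op (Lop circ) x f) u = - f (circ x u).
Proof. by rewrite dualE LopE //; exact: hc.1. Qed.

Lemma dotE x (f : H) u : (dual_op (Lop dot) x f) u = - f (dot x u).
Proof. by rewrite dualE LopE //; exact: hd.1. Qed.
Lemma EopE (g : 'End(H)) f : (- g) f = - g f.
Proof. exact: (@opp_lfunE _ _ _ g f). Qed.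
Lemma EaddE (g1 g2 : 'End(H)) f : (g1 + g2) f = g1 f + g2 f.
Proof. exact: (@add_lfunE _ _ _ g1 g2 f). Qed.
Lemma EscaleE a (g : 'End(H)) f : (a *: g) f = a *: g f.
Proof. exact: (@scale_lfunE _ _ _ a g f). Qed.
Lemma EcompE (g1 g2 : 'End(H)) f : (g1 \o g2)%VF f = g1 (g2 f).
Proof. exact: (@comp_lfunE _ _ _ _ g1 g2 f). Qed.
Lemma HlinZ (f : H) a v : f (a *: v) = a * f v.
Proof. exact: (linearZ_LR f a v). Qed.
Lemma HlinD (f : H) u v : f (u + v) = f u + f v.
Proof. exact: raddfD. Qed.
Lemma HlinB (f : H) u v : f (u - v) = f u - f v.
Proof. exact: raddfB. Qed.
Lemma HlinN (f : H) u : f (- u) = - f u.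
Proof. exact: raddfN. Qed.
Lemma KZ a (t : K^o) : a *: t = (a * t : K).
Proof. by []. Qed.
Lemma HopE (f : H) u : (- f) u = - f u.
Proof. exact: (@opp_lfunE _ _ _ f u). Qed.
Lemma HaddE (f g : H) u : (f + g) u = f u + g u.
Proof. exact: (@add_lfunE _ _ _ f g u). Qed.
Lemma HsubE (f g : H) u : (f - g) u = f u - g u.
Proof. by rewrite HaddE HopE. Qed.
Lemma HscaleE a (f : H) u : (a *: f) u = a *: f u.
Proof. exact: (@scale_lfunE _ _ _ a f u). Qed.


Lemma opDr {op : A -> A -> A} : bilinear_op op -> forall x u v, op x (u + v) = op x u + op x v.
Proof. by move=> hb x; apply: linD' (hb.1 x). Qed.
Lemma opBr {op : A -> A -> A} : bilinear_op op -> forall x u v, op x (u - v) = op x u - op x v.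
Proof. by move=> hb x; apply: linB' (hb.1 x). Qed.
Lemma opNr {op : A -> A -> A} : bilinear_op op -> forall x v, op x (- v) = - op x v.
Proof. by move=> hb x; apply: linN' (hb.1 x). Qed.
Lemma opNl {op : A -> A -> A} : bilinear_op op -> forall y v, op (- v) y = - op v y.
Proof. by move=> hb y; apply: linN' (hb.2 y). Qed.
Lemma opZr {op : A -> A -> A} : bilinear_op op -> forall x a v, op x (a *: v) = a *: op x v.
Proof. by move=> hb x; apply: linZ' (hb.1 x). Qed.
Lemma opDl {op : A -> A -> A} : bilinear_op op -> forall y u v, op (u + v) y = op u y + op v y.
Proof. by move=> hb y; apply: linD' (hb.2 y). Qed.
Lemma opBl {op : A -> A -> A} : bilinear_op op -> forall y u v, op (u - v) y = op u y - op v y.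
Proof. by move=> hb y; apply: linB' (hb.2 y). Qed.
Lemma opZl {op : A -> A -> A} : bilinear_op op -> forall y a v, op (a *: v) y = a *: op v y.
Proof. by move=> hb y; apply: linZ' (hb.2 y). Qed.

Definition mu x := - dual_op (Lop dot) x.
Definition rho x := dual_op (Lop circ) x.

Lemma EndP (g1 g2 : 'End(H)) : (forall f u, g1 f u = g2 f u) -> g1 = g2.
Proof. by move=> E; apply/lfunP => f; apply/lfunP => u; apply: E. Qed.

Ltac ev := rewrite /mu /rho /= ?(EaddE, EscaleE, EopE, EcompE, HaddE, HopE, HscaleE, dotE, rhoE).
Ltac pushA := rewrite ?(opNl hd, opNr hd, opNl hc, opNr hc, opDl hd, opBl hd, opZl hd, opDr hd, opBr hd, opZr hd, opDl hc, opBl hc, opZl hc, opDr hc, opBr hc, opZr hc).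
Ltac pushf := rewrite ?(HlinD, HlinB, HlinN, HlinZ, KZ).

Lemma rep_of :
  (forall x y u, dot (dot x y) u = dot y (dot x u)) ->
  (forall x y u, circ (circ x y - circ y x) u = circ x (circ y u) - circ y (circ x u)) ->
  (forall x y u, 2%:R *: circ y (dot x u) = circ (dot x y) u + dot x (circ y u)) ->
  (forall x y u, 2%:R *: dot (circ x y - circ y x) u = dot x (circ y u) - dot y (circ x u)) ->
  is_TPA_rep dot (fun x y => circ x y - circ y x) mu rho.
Proof.
move=> R1 R2 R3 R4; split; [|split; [|split; [|split; [|split]]]].
- move=> a x y; apply: EndP => f u; ev; pushA; pushf; ring.
- move=> a x y; apply: EndP => f u; ev; pushA; pushf; ring.
- move=> x y; apply: EndP => f u; ev; rewrite R1; ring.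
- move=> x y; apply: EndP => f u; ev; rewrite R2; pushf; ring.
- move=> x y; apply: EndP => f u; ev.
  have h := congr1 f (R3 x y u); move: h; pushf => h.
  apply: (via1 (-1) h); ring.
- move=> x y; apply: EndP => f u; ev.
  have h := congr1 f (R4 x y u); move: h; rewrite HlinZ HlinB !KZ => h.
  apply: (via1 (1) h); ring.
Qed.

Lemma Hlin0 (f : H) : f 0 = 0.
Proof. exact: raddf0. Qed.

Lemma rep_to3 : is_TPA_rep dot (fun x y => circ x y - circ y x) mu rho ->
  forall x y u, 2%:R *: circ y (dot x u) = circ (dot x y) u + dot x (circ y u).
Proof.
move=> [_ [_ [_ [_ [Rp3 Rp4]]]]] x y u; apply: sep => f.
have h := congr1 (fun g : 'End(H) => g f u) (Rp3 x y); move: h; ev; rewrite ?KZ => h.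
pushf; apply: (via1 (-1) h); ring.
Qed.
Lemma rep_to4 : is_TPA_rep dot (fun x y => circ x y - circ y x) mu rho ->
  forall x y u, 2%:R *: dot (circ x y - circ y x) u = dot x (circ y u) - dot y (circ x u).
Proof.
move=> [_ [_ [_ [_ [Rp3 Rp4]]]]] x y u; apply: sep => f.
have h := congr1 (fun g : 'End(H) => g f u) (Rp4 x y); move: h; ev; rewrite ?KZ => h.
rewrite HlinZ HlinB ?KZ; apply: (via1 1 h); ring.
Qed.

Lemma main_sec : let br := fun x y => circ x y - circ y x in
  ((is_TPA dot br /\ is_preLie circ /\ is_TPA_rep dot br mu rho) -> is_TCPD dot circ) /\
  (is_TCPD dot circ -> is_TPA dot br /\ is_TPA_rep dot br mu rho).
Proof.
move=> br; split.
- move=> [[[comm assoc] [_ TP3]] [P Rep]].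
  have R3 := rep_to3 Rep; have R4 := rep_to4 Rep.
  have T3' : forall x y z, 2%:R *: circ x (dot y z) = circ (dot z x) y + dot z (circ x y).
    by move=> x y z; rewrite (comm y z) R3.
  have T4' : forall x y z, 2%:R *: dot (circ x y) z - 2%:R *: dot (circ y x) z
                 = dot x (circ y z) - dot y (circ x z).
    by move=> x y z; rewrite -R4 (opBl hd) scalerBr.
  split; [by split|split; [exact P|split; [exact T3'|split; [exact T4'|]]]].
  move=> x y z; apply: sep => f.
  have h1 := congr1 f (T3' y z x); have h2 := congr1 f (T3' x z y).
  rewrite (comm y x) in h2.
  have h3 := congr1 f (T4' x y z); have h4 := congr1 f (TP3 x y z).
  rewrite /br in h4.
  move: h4; pushA; rewrite (comm z (circ x y)) (comm z (circ y x)); pushf => h4.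
  move: h1 h2 h3; pushf => h1 h2 h3.
  pushf; rewrite Hlin0; apply: (via4 1 (-1) (-1) 1 h1 h2 h3 h4); ring.
- move=> [[comm assoc] [P [T3 [T4 T5]]]].
  split.
  + split; [by split|split].
    * split; first by move=> x; rewrite /br subrr.
      move=> x y z; rewrite /br; apply: sep => f.
      have h1 := congr1 f (P y z x); have h2 := congr1 f (P z x y).
      have h3 := congr1 f (P x y z).
      move: h1 h2 h3; pushf => h1 h2 h3.
      pushA; pushf; rewrite Hlin0; apply: (via3 (-1) (-1) (-1) h1 h2 h3); ring.
    * move=> x y z; rewrite /br; apply: sep => f.
      have h1 := congr1 f (T3 y z x); have h2 := congr1 f (T3 x z y).
      rewrite (comm y x) in h2.
      have h3 := congr1 f (T4 x y z); have h5 := congr1 f (T5 x y z).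
      move: h1 h2 h3 h5; pushf; rewrite Hlin0 => h1 h2 h3 h5.
      pushA; rewrite (comm z (circ x y)) (comm z (circ y x)); pushf.
      apply: (via4 (-1) 1 1 1 h1 h2 h3 h5); ring.
  + apply: rep_of.
    * by move=> x y u; rewrite (comm x y) assoc.
    * move=> x y u; apply: sep => f; have h := congr1 f (P x y u); move: h; pushf => h.
      pushA; pushf; apply: (via1 1 h); ring.
    * by move=> x y u; rewrite (comm x u) T3.
    * by move=> x y u; rewrite (opBl hd) scalerBr T4.
Qed.
End Main.

Theorem mainTheorem17 (K : fieldType) (A : vectType K)
  (dot circ : A -> A -> A) :
  [pchar K] =i pred0 ->
  bilinear_op dot -> bilinear_op circ ->
  let br := fun x y => circ x y - circ y x in
  ((is_TPA dot br /\ is_preLie circ /\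
    is_TPA_rep dot br (fun x => - dual_op (Lop dot) x) (dual_op (Lop circ)))
     -> is_TCPD dot circ) /\
  (is_TCPD dot circ ->
    is_TPA dot br /\
    is_TPA_rep dot br (fun x => - dual_op (Lop dot) x) (dual_op (Lop circ))).
Proof. move=> _ hd hc; exact: (@main_sec K A dot circ hd hc). Qed.
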